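(* There exist a graph $H$ and a positive semidefinite $0$-regular kernel $W$ such that $t(H,W)<0$.
   Context: Let $(\Omega,\mu)$ be an atomless standard probability space. A kernel is a bounded symmetric measurable $W:\Omega\times\Omega\to\mathbb R$. For a graph $H$, $t(H,W)=\int_{\Omega^{V(H)}}\prod_{uv\in E(H)}W(x_u,x_v)\prod_{v\in V(H)}d\mu(x_v)$. A kernel is $0$-regular if $\int_\Omega W(x,y)\,dy=0$ for a.e. $x$, and positive semidefinite if $\iint f(x)W(x,y)f(y)\,dx\,dy\ge0$ for every bounded measurable $f:\Omega\to\mathbb R$. *)

(* Defs.v *)
From HB Require Import structures.
From mathcomp Require Import all_boot all_order all_algebra.
From mathcomp Require Import all_classical all_reals all_analysis.
Set Implicit Arguments. Unset Strict Implicit. Unset Printing Implicit Defensive.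
Import Order.TTheory GRing.Theory Num.Theory.
Local Open Scope classical_set_scope.
Local Open Scope ring_scope.

Section Graphons.
Variable R : realType.

Definition Omega : set R := `[0%R, 1%R].

Definition leb := (@lebesgue_measure R).

Definition intO (f : R -> R) : R := Rintegral leb Omega f.

Definition is_kernel (W : R -> R -> R) : Prop :=
  [/\ measurable_fun (Omega `*` Omega) (fun p : R * R => W p.1 p.2),
      (exists M : R, forall x y, Omega x -> Omega y -> `|W x y| <= M) &
      (forall x y, Omega x -> Omega y -> W x y = W y x)].

Definition zero_regular (W : R -> R -> R) : Prop :=
  {ae leb, forall x, Omega x -> intO (fun y => W x y) = 0}.

Definition psd_kernel (W : R -> R -> R) : Prop :=
  forall f : R -> R, measurable_fun Omega f ->
    (exists M : R, forall x, Omega x -> `|f x| <= M) ->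
    0 <= intO (fun x => intO (fun y => f x * W x y * f y)).

(* Iterated integral over Omega^k of F : (nat -> R) -> R, integrating
   coordinates 0, ..., k-1 (coordinate k-1 innermost). *)
Fixpoint iter_intO (k : nat) (F : (nat -> R) -> R) : R :=
  match k with
  | 0 => F (fun _ => 0)
  | k'.+1 => iter_intO k' (fun x =>
        intO (fun y => F (fun i => if i == k' then y else x i)))
  end.

Definition simple_graph (n : nat) (E : rel 'I_n) : Prop :=
  (forall i, ~~ E i i) /\ (forall i j, E i j = E j i).

Definition hom_density (n : nat) (E : rel 'I_n) (W : R -> R -> R) : R :=
  iter_intO n (fun x =>
    \prod_(i < n) \prod_(j < n | (i < j)%N && E i j) W (x i) (x j)).

End Graphons.

(* Main.v *)
Require Import Defs.
From mathcomp Require Import all_boot all_order all_algebra.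
From mathcomp Require Import all_classical all_reals all_analysis.
From mathcomp Require Import measurable_realfun.
From mathcomp Require Import ring lra.
Set Implicit Arguments. Unset Strict Implicit. Unset Printing Implicit Defensive.
Import Order.TTheory GRing.Theory Num.Theory.
Import numFieldNormedType.Exports.
Local Open Scope classical_set_scope.
Local Open Scope ring_scope.

Section S.
Variable R : realType.
Implicit Types f g : R -> R.

Lemma mOmega : measurable (@Omega R).
Proof. exact: measurable_itv. Qed.

Lemma Omega_fin : (@leb R (@Omega R) < +oo)%E.
Proof. by rewrite /leb /Omega lebesgue_measure_itv/= lte01 EFinN sube0 ltry. Qed.

Lemma bnd_int f M0 : measurable_fun (@Omega R) f ->
  (forall x, @Omega R x -> `|f x| <= M0) ->
  (@leb R).-integrable (@Omega R) (EFin \o f).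
Proof.
move=> mf H.
have hb : [bounded f x | x in (@Omega R)].
  exists M0; split; first exact: num_real.
  move=> M /ltW M0M x Ox /=; exact: (le_trans (H x Ox)).
apply: measurable_bounded_integrable => //.
- exact: mOmega.
- exact: Omega_fin.
Qed.

Lemma intOZl g r : (@leb R).-integrable (@Omega R) (EFin \o g) ->
  intO (fun y => r * g y) = r * intO g.
Proof. by move=> ig; rewrite /intO RintegralZl//; exact: mOmega. Qed.

Lemma iter_prod (gs : nat -> R -> R) :
  (forall i, (@leb R).-integrable (@Omega R) (EFin \o gs i)) ->
  forall k c, iter_intO k (fun x => (\prod_(i < k) gs i (x i)) * c) =
     (\prod_(i < k) intO (gs i)) * c.
Proof.
move=> ig; elim=> [|k IH] c /=; first by rewrite !big_ord0.
have -> : (fun x : nat -> R => intO (fun y =>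
    (\prod_(i < k.+1) gs i (if i == k :> nat then y else x i)) * c)) =
    (fun x => (\prod_(i < k) gs i (x i)) * (intO (gs k) * c)).
  apply: funext => x.
  have -> : (fun y => (\prod_(i < k.+1) gs i (if i == k :> nat then y else x i)) * c)
     = (fun y => ((\prod_(i < k) gs i (x i)) * c) * gs k y).
    apply: funext => y; rewrite big_ord_recr /= eqxx.
    rewrite (eq_bigr (fun i : 'I_k => gs i (x i))); first ring.
    by move=> i _; rewrite ltn_eqF.
  rewrite intOZl//. ring.
rewrite IH big_ord_recr /=. ring.
Qed.

Definition ia (t : R) : R -> R := \1_(`]-oo, t[ : set R).

Lemma ia_meas t : measurable_fun setT (ia t).
Proof. by apply: measurable_indic; exact: measurable_itv. Qed.

Lemma ia01 t y : ia t y = 0 \/ ia t y = 1.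
Proof. by rewrite /ia indicE; case: (y \in _); [right|left]. Qed.

Lemma ia_bnd t y : `|ia t y| <= 1.
Proof. by case: (ia01 t y) => ->; rewrite ?normr0 ?normr1. Qed.

Lemma intT g M : measurable_fun setT g -> (forall y, `|g y| <= M) ->
  (@leb R).-integrable (@Omega R) (EFin \o g).
Proof.
move=> mg bg; apply: (@bnd_int g M) => //.
exact: measurable_funS mg.
Qed.

Lemma int_ia t : 0 < t <= 1 -> intO (ia t) = t.
Proof.
move=> /andP[t0 t1].
rewrite /intO /Rintegral /ia integral_indic; last exact: measurable_itv.
rewrite (_ : `]-oo, t[ `&` @Omega R = [set` `[0, t[]).
  rewrite /leb; have h := (@lebesgue_measure_itv R `[0, t[).
  by move: h; rewrite /= lte_fin t0 oppr0 adde0 => h; exact: (congr1 fine h).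
apply/seteqP; split=> x /=; rewrite /Omega /= !in_itv /=.
  by move=> [xt /andP[-> _]]; rewrite xt.
move=> /andP[x0 xt]; split => //; rewrite x0 /=.
exact: (le_trans (ltW xt)).
exact: mOmega.
Qed.

Lemma ia_lt t y : y < t -> ia t y = 1.
Proof. by move=> yt; rewrite /ia indicE mem_set //= in_itv /= yt. Qed.

Lemma ia_ge t y : t <= y -> ia t y = 0.
Proof. by move=> ty; rewrite /ia indicE memNset //= in_itv /= ltNge ty. Qed.

Definition phi (y : R) : R := 2 + 11 * ia (5^-1) y - 7 * ia (3/5) y.

Lemma phiX k y : phi y ^+ k = 2^+k + (6^+k - (-5)^+k) * ia (5^-1) y
   + ((-5)^+k - 2^+k) * ia (3/5) y.
Proof.
rewrite /phi.
have h : (5^-1 : R) < 3/5.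
  rewrite -[X in X < _]mul1r ltr_pM2r ?invr_gt0 ?ltr0n // ltr1n //.
have [y1|y1] := ltP y (5^-1).
  rewrite ia_lt // ia_lt; last exact: lt_trans h.
  have -> : (2 + 11 * 1 - 7 * 1 : R) = 6 by rewrite !mulr1; lra.
  ring.
rewrite (ia_ge y1).
have [y2|y2] := ltP y (3/5).
  rewrite ia_lt //.
  have -> : (2 + 11 * 0 - 7 * 1 : R) = -5 by rewrite mulr1 mulr0; lra.
  ring.
rewrite ia_ge //.
have -> : (2 + 11 * 0 - 7 * 0 : R) = 2 by rewrite mulr0; lra.
ring.
Qed.

Lemma phi_meas : measurable_fun setT phi.
Proof.
rewrite /phi; apply: measurable_funB; first apply: measurable_funD.
- exact: measurable_cst.
- apply: measurable_funM; [exact: measurable_cst | exact: ia_meas].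
- apply: measurable_funM; [exact: measurable_cst | exact: ia_meas].
Qed.

Lemma phi_bnd y : `|phi y| <= 6.
Proof.
rewrite /phi.
have h : (5^-1 : R) < 3/5.
  rewrite -[X in X < _]mul1r ltr_pM2r ?invr_gt0 ?ltr0n // ltr1n //.
have [y1|y1] := ltP y (5^-1).
  rewrite ia_lt // ia_lt; last exact: lt_trans h.
  rewrite !mulr1 ger0_norm; lra.
rewrite (ia_ge y1).
have [y2|y2] := ltP y (3/5).
  rewrite ia_lt // mulr1 mulr0 ler0_norm; lra.
rewrite ia_ge // !mulr0 ger0_norm; lra.
Qed.

Lemma intO_cst r : intO (fun _ : R => r) = r.
Proof.
rewrite /intO Rintegral_cst; last exact: mOmega.
have h := (@lebesgue_measure_itv R `[0, 1]).
move: h; rewrite /= lte_fin ltr01 oppr0 adde0 => h.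
by rewrite /leb /Omega (congr1 fine h) /= mulr1.
Qed.

Lemma int_cst r : (@leb R).-integrable (@Omega R) (EFin \o (fun _ : R => r)).
Proof. by apply: (@intT _ `|r|) => //; exact: measurable_cst. Qed.

Lemma int_cia r t : (@leb R).-integrable (@Omega R) (EFin \o (fun y => r * ia t y)).
Proof.
apply: (@intT _ `|r|).
  apply: measurable_funM; [exact: measurable_cst | exact: ia_meas].
by move=> y; rewrite normrM -[X in _ <= X]mulr1 ler_wpM2l // ia_bnd.
Qed.

Lemma int_sum r a t : (@leb R).-integrable (@Omega R) (EFin \o (fun y => r + a * ia t y)).
Proof.
apply: (@intT _ (`|r| + `|a|)).
  apply: measurable_funD; first exact: measurable_cst.
  apply: measurable_funM; [exact: measurable_cst | exact: ia_meas].
move=> y; apply: (le_trans (ler_normD _ _)); rewrite lerD2l.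
by rewrite normrM -[X in _ <= X]mulr1 ler_wpM2l // ia_bnd.
Qed.

Lemma intO_lin r a b s t : 0 < s <= 1 -> 0 < t <= 1 ->
  intO (fun y => r + a * ia s y + b * ia t y) = r + a * s + b * t.
Proof.
move=> hs ht.
rewrite /intO RintegralD; [|exact: mOmega|exact: int_sum|exact: int_cia].
rewrite RintegralD; [|exact: mOmega|exact: int_cst|exact: int_cia].
rewrite !RintegralZl; [|exact: mOmega|exact: (@intT _ 1 (ia_meas _) (ia_bnd _))
  |exact: mOmega|exact: (@intT _ 1 (ia_meas _) (ia_bnd _))].
by rewrite -/(intO _) intO_cst -!/(intO _) !int_ia.
Qed.

Lemma mom k : intO (fun y => phi y ^+ k) =
  2^+k + (6^+k - (-5)^+k) * 5^-1 + ((-5)^+k - 2^+k) * (3/5).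
Proof.
have -> : (fun y => phi y ^+ k) = (fun y => 2^+k + (6^+k - (-5)^+k) * ia (5^-1) y
   + ((-5)^+k - 2^+k) * ia (3/5) y) by apply: funext => y; exact: phiX.
rewrite intO_lin //; apply/andP; split; lra.
Qed.

Definition edges : seq (nat * nat) :=
  [:: (0,1); (0,2); (0,3); (0,4); (0,5); (1,2); (1,3); (4,5)]%N.
Definition E6 : rel 'I_6 := fun i j =>
  ((nat_of_ord i, nat_of_ord j) \in edges) || ((nat_of_ord j, nat_of_ord i) \in edges).
Definition degs : seq nat := [:: 5; 3; 2; 2; 2; 2]%N.
Definition gs (i : nat) : R -> R := fun y => phi y ^+ (nth 0%N degs i).
Definition W (x y : R) : R := phi x * phi y.

Lemma integrand : (fun x : nat -> R =>
    \prod_(i < 6) \prod_(j < 6 | (i < j)%N && E6 i j) W (x i) (x j)) =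
  (fun x => (\prod_(i < 6) gs i (x i)) * 1).
Proof.
apply: funext => x; rewrite mulr1.
under eq_bigr do rewrite big_mkcond.
rewrite !big_ord_recr !big_ord0 /= /W /gs /=.
ring.
Qed.

Lemma int_phiX k : (@leb R).-integrable (@Omega R) (EFin \o (fun y => phi y ^+ k)).
Proof.
apply: (@intT _ (6 ^+ k)); first exact: measurable_funX phi_meas.
by move=> y; rewrite normrX lerXn2r ?nnegrE ?phi_bnd.
Qed.

Lemma hd_neg : hom_density E6 W < 0.
Proof.
rewrite /hom_density integrand iter_prod; last by move=> i; exact: int_phiX.
rewrite !big_ord_recr big_ord0 /= /gs /= !mom.
rewrite !exprS !expr0. lra.
Qed.

Lemma m1 : intO phi = 0.
Proof.
rewrite (_ : phi = fun y => phi y ^+ 1) //; rewrite mom !expr1; lra.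
Qed.

Lemma int_phi : (@leb R).-integrable (@Omega R) (EFin \o phi).
Proof. exact: (@intT _ 6 phi_meas phi_bnd). Qed.

Lemma psdW : psd_kernel W.
Proof.
move=> f mf [M hM].
have mfp : measurable_fun (@Omega R) (fun y => phi y * f y).
  apply: measurable_funM => //; exact: measurable_funS phi_meas.
have bfp : forall y, @Omega R y -> `|phi y * f y| <= 6 * M.
  move=> y Oy; rewrite normrM ler_pM ?phi_bnd ?hM //.
have ifp := bnd_int mfp bfp.
have ipf : (@leb R).-integrable (@Omega R) (EFin \o (fun y => f y * phi y)).
  apply: (@bnd_int _ (6 * M)).
    apply: measurable_funM => //; exact: measurable_funS phi_meas.
  by move=> y Oy; rewrite mulrC; exact: bfp.
have -> : (fun x => intO (fun y => f x * W x y * f y)) =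
    (fun x => (f x * phi x) * intO (fun y => phi y * f y)).
  apply: funext => x; rewrite -intOZl //; congr intO; apply: funext => y.
  rewrite /W; ring.
rewrite /intO RintegralZr //; last exact: mOmega.
rewrite -/(intO _) -/(intO _).
have -> : intO (fun x => f x * phi x) = intO (fun y => phi y * f y).
  by congr intO; apply: funext => y; rewrite mulrC.
by rewrite -expr2 sqr_ge0.
Qed.

End S.

Theorem proposition5p2 (R : realType) :
  exists (n : nat) (E : rel 'I_n) (W : R -> R -> R),
    simple_graph E /\ is_kernel W /\ psd_kernel W /\ zero_regular W /\
    hom_density E W < 0.
Proof.
exists 6%N, (@E6), (@W R); split; [|split; [|split; [|split]]].
- split; last by move=> i j; rewrite /E6 orbC.
  by case=> [[|[|[|[|[|[|m]]]]]] Hm].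
- split.
  + apply: measurable_funM.
    * apply: measurableT_comp; first exact: phi_meas.
      apply: (measurable_funS measurableT) => //; exact: measurable_fst.
    * apply: measurableT_comp; first exact: phi_meas.
      apply: (measurable_funS measurableT) => //; exact: measurable_snd.
  + exists 36 => x y _ _; rewrite /W normrM.
    have -> : (36 : R) = 6 * 6 by lra.
    by rewrite ler_pM ?phi_bnd.
  + by move=> x y _ _; rewrite /W mulrC.
- exact: psdW.
- apply: aeW => x _; rewrite /W intOZl ?m1 ?mulr0 //; exact: int_phi.
- exact: hd_neg.
Qed.
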